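(* Let $Q$ be a loop, $S\le Q$, and $g\in\mathrm{Mlt}_\lambda(Q)$. For each $x\in g(S)$ there exists $h_x\in\mathrm{Inn}_\lambda(Q)$ such that $g(S)=x\,h_x(S)$. In particular, if $1\in g(S)$, then there exists $h\in\mathrm{Inn}_\lambda(Q)$ such that $g(S)=h(S)$.
   Context: For $x\in Q$, $L_x:Q\to Q$, $y\mapsto xy$, is the left translation. $\mathrm{Mlt}_\lambda(Q)=\langle L_x : x\in Q\rangle$ is the left multiplication group, and $\mathrm{Inn}_\lambda(Q)$ is its subgroup stabilizing the identity $1$. For a set $A$, $xA=\{xa:a\in A\}$. *)

(* Defs.v *)
From Stdlib Require Import List.
Import ListNotations.

Record loop := Loop {
  carrier :> Type;
  lmul : carrier -> carrier -> carrier;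
  ldiv : carrier -> carrier -> carrier;   (* ldiv x y = x \ y *)
  rdiv : carrier -> carrier -> carrier;   (* rdiv y x = y / x *)
  one : carrier;
  lmul_ldiv : forall x y, lmul x (ldiv x y) = y;
  ldiv_lmul : forall x y, ldiv x (lmul x y) = y;
  rdiv_lmul : forall x y, lmul (rdiv y x) x = y;
  lmul_rdiv : forall x y, rdiv (lmul y x) x = y;
  one_lmul : forall x, lmul one x = x;
  lmul_one : forall x, lmul x one = x
}.

Arguments lmul {l}. Arguments ldiv {l}. Arguments rdiv {l}. Arguments one {l}.

Definition L {Q : loop} (x : Q) : Q -> Q := fun y => lmul x y.
Definition Linv {Q : loop} (x : Q) : Q -> Q := fun y => ldiv x y.

Fixpoint eval_word {Q : loop} (w : list (bool * Q)) : Q -> Q :=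
  match w with
  | [] => fun y => y
  | (b, x) :: w' => fun y => (if b then L x else Linv x) (eval_word w' y)
  end.

(* g is in Mlt_lambda(Q) = < L_x : x in Q > (as a group of permutations) *)
Definition in_Mlt_lambda {Q : loop} (g : Q -> Q) : Prop :=
  exists w : list (bool * Q), forall y, g y = eval_word w y.

Definition in_Inn_lambda {Q : loop} (h : Q -> Q) : Prop :=
  in_Mlt_lambda h /\ h one = one.

Definition subloop {Q : loop} (S : Q -> Prop) : Prop :=
  S one /\
  (forall x y, S x -> S y -> S (lmul x y)) /\
  (forall x y, S x -> S y -> S (ldiv x y)) /\
  (forall x y, S x -> S y -> S (rdiv x y)).

Definition image {Q : loop} (g : Q -> Q) (S : Q -> Prop) : Q -> Prop :=
  fun z => exists s, S s /\ z = g s.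

Definition lcoset {Q : loop} (x : Q) (A : Q -> Prop) : Q -> Prop :=
  fun z => exists a, A a /\ z = lmul x a.

Definition set_eq {T : Type} (A B : T -> Prop) : Prop := forall z, A z <-> B z.

(* Main.v *)
Require Import Defs.
From Stdlib Require Import List.
Import ListNotations.

Lemma eval_app {Q : loop} (w1 w2 : list (bool * Q)) y :
  eval_word (w1 ++ w2) y = eval_word w1 (eval_word w2 y).
Proof.
  induction w1 as [|[b x] w IH]; simpl; [reflexivity|]. now rewrite IH.
Qed.

Theorem lemma6p4 (Q : loop) (S : Q -> Prop) (g : Q -> Q) :
  subloop S -> in_Mlt_lambda g ->
  (forall x, image g S x ->
     exists h : Q -> Q, in_Inn_lambda h /\ set_eq (image g S) (lcoset x (image h S))) /\
  (image g S one ->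
     exists h : Q -> Q, in_Inn_lambda h /\ set_eq (image g S) (image h S)).
Proof.
  intros [S1 [Smul [Sld Srd]]] [w Hw].
  assert (main : forall x, image g S x ->
     exists h : Q -> Q, in_Inn_lambda h /\ set_eq (image g S) (lcoset x (image h S))).
  { intros x [s0 [Hs0 ->]].
    exists (fun y => ldiv (g s0) (g (lmul s0 y))). split.
    - split.
      + exists ((false, g s0) :: w ++ [(true, s0)]). intros y. simpl.
        rewrite eval_app. simpl. unfold Linv, L. now rewrite <- Hw.
      + simpl. rewrite lmul_one. rewrite <- (lmul_one _ (g s0)) at 2. now rewrite ldiv_lmul.
    - intros z. split.
      + intros [s [Hs ->]]. exists (ldiv (g s0) (g s)). split.
        * exists (ldiv s0 s). split; [now apply Sld|]. now rewrite lmul_ldiv.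
        * now rewrite lmul_ldiv.
      + intros [a [[s [Hs ->]] ->]]. simpl; rewrite lmul_ldiv.
        exists (lmul s0 s). split; [now apply Smul|reflexivity]. }
  split; [exact main|].
  intros H1. destruct (main one H1) as [h [Hh He]]. exists h. split; [exact Hh|].
  intros z. rewrite (He z). split.
  - intros [a [Ha ->]]. now rewrite one_lmul.
  - intros Ha. exists z. split; [exact Ha|]. now rewrite one_lmul.
Qed.
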